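(* Let $B\ge1$, $h\ge2$ be integers and $\Delta\ge 2$ an even integer. (1) There is a network (graph of maximum degree at most $\Delta$) with $\Theta(\Delta^h)$ nodes, together with an instance of the $B$-bit $h$-hop simulation problem on it, such that any (possibly randomized) Beeping Network algorithm that terminates within $\frac12 B(\Delta-1)^{h-2}(\Delta/2)^3$ rounds outputs the correct result with probability at most $2^{-\frac12 B(\Delta-1)^{h-2}(\Delta/2)^3}=2^{-\Theta(B\Delta^{h+1})}$; in particular, any $B$-bit $h$-hop simulation algorithm requires $\Omega(B\Delta^{h+1})$ beeping rounds to succeed with probability more than $2^{-\frac12 B(\Delta-1)^{h-2}(\Delta/2)^3}$. (2) There is a network of maximum degree at most $\Delta$ with $\Theta(\Delta^h)$ nodes, together with an instance of $B$-bit $h$-hop Local Broadcast on it, such that any (possibly randomized) algorithm that terminates within $\frac12 B(\Delta-1)^{h-2}(\Delta/2)^2$ rounds succeeds with probability at most $2^{-\frac12 B(\Delta-1)^{h-2}(\Delta/2)^2}=2^{-\Theta(B\Delta^{h})}$; in particular, any $B$-bit $h$-hop Local Broadcast algorithm requires $\Omega(B\Delta^{h})$ beeping rounds to succeed with probability more than that.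
   Context: A Beeping Network is a network of $n$ nodes with unique IDs whose topology is an undirected graph $G=(V,E)$. Time is divided into synchronous rounds and all nodes start simultaneously. In each round every node either beeps or listens; a listening node hears ''silence'' if no neighbor beeps and ''noise'' if at least one neighbor beeps, and cannot distinguish one beep from several. Nodes may use private randomness. $B$-bit $h$-hop simulation: each node holds messages (possibly different for different destinations) of at most $B$ bits addressed to other nodes, and must deliver each such message to its destination whenever the destination is within distance $h$ (hops) of the source. $B$-bit $h$-hop Local Broadcast: each node holds a single message of at most $B$ bits that must be delivered to all nodes within distance $h$ of it. *)

(* Defs.v *)
From mathcomp Require Import all_boot all_order all_algebra.
Set Implicit Arguments. Unset Strict Implicit. Unset Printing Implicit Defensive.
Import Order.TTheory GRing.Theory Num.Theory.

Section Beeping.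
Variable T : finType.          (* the nodes; an element of T is the node's unique ID *)
Variable adj : rel T.

Definition simple_graph : Prop :=
  (forall u v, adj u v = adj v u) /\ (forall v, ~~ adj v v).

Definition max_degree_le (D : nat) : Prop :=
  forall v, #|[set u | adj v u]| <= D.

Fixpoint within (k : nat) (u v : T) : bool :=
  match k with
  | 0 => u == v
  | k'.+1 => within k' u v || [exists w, within k' u w && adj w v]
  end.

(* Node v with local
   input x and private random seed s, having heard the history hs (one bit per
   past round: true = noise, false = silence or "v itself beeped"), decides
   whether to beep in the next round (alg_beep), and after the last round
   produces its output (alg_out). *)
Record algo (I S O : Type) := Algo {
  alg_beep : T -> I -> S -> seq bool -> bool;
  alg_out  : T -> I -> S -> seq bool -> O }.

Section Exec.
Variables (I S O : Type) (A : algo I S O) (x : T -> I) (s : T -> S).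

Fixpoint hist (k : nat) : T -> seq bool :=
  match k with
  | 0 => fun _ => [::]
  | k'.+1 =>
    let H := hist k' in
    let b := fun u => alg_beep A u (x u) (s u) (H u) in
    fun v => rcons (H v) (~~ b v && [exists u, adj v u && b u])
  end.

Definition outputs (rounds : nat) (v : T) : O :=
  alg_out A v (x v) (s v) (hist rounds v).
End Exec.

Local Open Scope ring_scope.
Definition is_seed_distr (R : numDomainType) (S : finType) (mu : T -> S -> R) :=
  forall v, (forall z, 0 <= mu v z) /\ \sum_(z : S) mu v z = 1.

(* Probability of success: inputs drawn uniformly at random from {ffun T -> I},
   seeds drawn independently, node v's seed according to mu v. *)
Definition succ_prob (R : numFieldType) (I S O : finType) (A : algo I S O)
    (mu : T -> S -> R) (rounds : nat)
    (correct : {ffun T -> I} -> (T -> O) -> bool) : R :=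
  (#|{ffun T -> I}|%:R)^-1 *
  \sum_(x : {ffun T -> I}) \sum_(s : {ffun T -> S})
     (\prod_(v : T) mu v (s v)) * (correct x (outputs A x s rounds))%:R.

(* The instance is the set P of (source, destination)
   pairs; x u w is the message held by u for destination w (only entries with
   (u,w) in P are relevant). *)
Definition sim_instance (h : nat) (P : {set T * T}) : Prop :=
  forall p, p \in P -> (p.1 != p.2) && within h p.1 p.2.

Definition sim_correct (B : nat) (P : {set T * T})
    (x : {ffun T -> {ffun T -> B.-tuple bool}})
    (o : T -> {ffun T -> B.-tuple bool}) : bool :=
  [forall p in P, o p.2 p.1 == x p.1 p.2].

Definition lb_correct (B h : nat) (x : {ffun T -> B.-tuple bool})
    (o : T -> {ffun T -> B.-tuple bool}) : bool :=
  [forall u, forall w, ((u != w) && within h u w) ==> (o w u == x u)].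
End Beeping.

(* Main.v *)
Require Import Defs.
From mathcomp Require Import all_boot all_order all_algebra zify.
Set Implicit Arguments. Unset Strict Implicit. Unset Printing Implicit Defensive.
Import Order.TTheory GRing.Theory Num.Theory.

Section Channel.
Variables (T : finType) (adj : rel T) (I S : finType) (O : Type).
Variable A : algo T I S O.
Variable Y : {set T}.
Hypothesis hY : forall y y' u u', y \in Y -> y' \in Y -> u \notin Y -> u' \notin Y ->
  adj y u -> adj y' u' -> adj y' u.

Definition zbit (x : T -> I) (s : T -> S) (k : nat) : bool :=
  [exists u, [&& u \notin Y, [exists y in Y, adj y u] &
     alg_beep A u (x u) (s u) (hist adj A x s k u)]].

Fixpoint simH (x : T -> I) (s : T -> S) (z : nat -> bool) (k : nat) : T -> seq bool :=
  match k with
  | 0 => fun _ => [::]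
  | k'.+1 =>
    let H := simH x s z k' in
    let b := fun u => alg_beep A u (x u) (s u) (H u) in
    fun v => rcons (H v) (~~ b v && ([exists u, (u \in Y) && adj v u && b u]
                     || ([exists u, (u \notin Y) && adj v u] && z k')))
  end.

Lemma simH_ext x s z z' r : (forall k, k < r -> z k = z' k) ->
  forall k, k <= r -> simH x s z k = simH x s z' k.
Proof.
move=> hz; elim=> [//|k IH] hk /=.
by rewrite IH ?(ltnW hk) // hz.
Qed.

Lemma simH_ok (x x' : T -> I) s : (forall y, y \in Y -> x' y = x y) ->
  forall k y, y \in Y -> simH x s (zbit x' s) k y = hist adj A x' s k y.
Proof.
move=> hx; elim=> [//|k IH] y yY /=.
rewrite IH // hx //; congr (rcons _ (_ && _)).
set b := fun u => alg_beep A u (x' u) (s u) (hist adj A x' s k u).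
have hb : forall u, u \in Y -> alg_beep A u (x u) (s u) (simH x s (zbit x' s) k u) = b u.
  by move=> u uY; rewrite /b IH // hx.
apply/idP/idP.
- case/orP.
  + case/existsP=> u /andP[/andP[uY ayu]]; rewrite hb // => bu.
    by apply/existsP; exists u; rewrite ayu.
  + case/andP=> /existsP[u /andP[uY ayu]] /existsP[w /and3P[wY /existsP[y' /andP[y'Y ay'w]] bw]].
    apply/existsP; exists w; rewrite bw andbT.
    exact: (hY y'Y yY wY uY ay'w ayu).
- case/existsP=> u /andP[ayu bu].
  case: (boolP (u \in Y)) => uY.
  + by apply/orP; left; apply/existsP; exists u; rewrite uY ayu hb.
  + apply/orP; right; apply/andP; split.
      by apply/existsP; exists u; rewrite uY ayu.
    apply/existsP; exists u; rewrite uY bu andbT /=.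
    by apply/existsP; exists y; rewrite yY.
Qed.

End Channel.


Section Count.
Variables (T : finType) (adj : rel T) (I S O : finType).
Variable A : algo T I S O.
Variable Y : {set T}.
Hypothesis hY : forall y y' u u', y \in Y -> y' \in Y -> u \notin Y -> u' \notin Y ->
  adj y u -> adj y' u' -> adj y' u.
Variable V : finType.
Variables (upd : {ffun T -> I} -> V -> {ffun T -> I}) (get : {ffun T -> I} -> V)
  (ext : (T -> O) -> V) (correct : {ffun T -> I} -> (T -> O) -> bool).
Hypothesis get_upd : forall x v, get (upd x v) = v.
Hypothesis upd_upd : forall x v, upd (upd x v) (get x) = x.
Hypothesis upd_Y : forall x v y, y \in Y -> upd x v y = x y.
Hypothesis ext_ok : forall x o, correct x o -> ext o = get x.
Hypothesis ext_loc : forall o o', (forall y, y \in Y -> o y = o' y) -> ext o = ext o'.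

Lemma fiber_bound (x : {ffun T -> I}) (s : {ffun T -> S}) r :
  #|[pred v | correct (upd x v) (outputs adj A (upd x v) s r)]| <= 2 ^ r.
Proof.
pose zf (t : r.-tuple bool) := fun k => nth false t k.
pose Phi (t : r.-tuple bool) :=
  ext (fun y => alg_out A y (x y) (s y) (simH adj A Y x s (zf t) r y)).
apply: (@leq_trans #|[set Phi t | t in [set: r.-tuple bool]]|).
  apply: subset_leq_card; apply/subsetP => v; rewrite inE => /= hc.
  have sz : size (map (zbit adj A Y (upd x v) s) (iota 0 r)) == r.
    by rewrite size_map size_iota.
  apply/imsetP; exists (Tuple sz); first by rewrite inE.
  rewrite -[v in LHS](get_upd x v) -(ext_ok hc) /Phi; apply: ext_loc => y yY.
  rewrite /outputs upd_Y //.
  rewrite (@simH_ext _ adj _ _ _ A Y x s _ (zbit adj A Y (upd x v) s) r) //.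
    by rewrite (simH_ok A hY) // => y' y'Y; rewrite upd_Y.
  move=> k kr; rewrite /zf /= (nth_map 0) ?size_iota // nth_iota //.
apply: leq_trans (leq_imset_card _ _) _.
by rewrite cardsT card_tuple card_bool.
Qed.

Lemma total_bound (s : {ffun T -> S}) r :
  (\sum_(x : {ffun T -> I}) correct x (outputs adj A x s r)) * #|V| <= 2 ^ r * #|{ffun T -> I}|.
Proof.
rewrite big_distrl /=.
set f := fun x : {ffun T -> I} => nat_of_bool (correct x (outputs adj A x s r)).
have -> : \sum_x f x * #|V| = \sum_x \sum_(v : V) f (upd x v).
  rewrite pair_bigA /=.
  pose g (p : {ffun T -> I} * V) := (upd p.1 p.2, get p.1).
  have gK : involutive g by case=> x v; rewrite /g /= upd_upd get_upd.
  rewrite (reindex_inj (inv_inj gK)) /=.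
  rewrite (eq_bigr (fun p => f p.1)); last by case=> x v _; rewrite /g /= upd_upd.
  rewrite -(pair_bigA _ (fun x (v : V) => f x)) /=.
  by apply: eq_bigr => x _; rewrite sum_nat_const mulnC.
rewrite mulnC -sum_nat_const.
apply: leq_sum => x _.
apply: leq_trans (fiber_bound x s r).
rewrite -sum1_card [X in _ <= X]big_mkcond /=.
by apply: leq_sum => v _; rewrite /f inE; case: correct.
Qed.

Local Open Scope ring_scope.
Lemma prob_bound (R : realFieldType) (mu : T -> S -> R) r : is_seed_distr mu -> (0 < #|V|)%N ->
  0 <= succ_prob adj A mu r correct <= (2 ^ r)%:R / #|V|%:R.
Proof.
move=> hmu V0.
have w0 : forall s : {ffun T -> S}, 0 <= \prod_v mu v (s v).
  by move=> s; apply: prodr_ge0 => v _; case: (hmu v).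
have w1 : \sum_(s : {ffun T -> S}) \prod_v mu v (s v) = 1.
  rewrite -(bigA_distr_bigA (fun v z => mu v z)) /=.
  by rewrite big1 // => v _; case: (hmu v).
rewrite /succ_prob exchange_big /=.
set N := #|{ffun T -> I}|.
have hc : forall s : {ffun T -> S},
  \sum_x \prod_v mu v (s v) * (correct x (outputs adj A x s r))%:R
  = \prod_v mu v (s v) * (\sum_x nat_of_bool (correct x (outputs adj A x s r)))%:R.
  by move=> s; rewrite natr_sum mulr_sumr.
under eq_bigr do rewrite hc.
apply/andP; split.
  apply: mulr_ge0; first by rewrite invr_ge0.
  by apply: sumr_ge0 => s _; apply: mulr_ge0.
apply: (@le_trans _ _ (N%:R^-1 * \sum_(s : {ffun T -> S}) \prod_v mu v (s v) * ((2^r * N)%:R / #|V|%:R))).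
  apply: ler_wpM2l; first by rewrite invr_ge0.
  apply: ler_sum => s _; apply: ler_wpM2l => //.
  by rewrite ler_pdivlMr ?ltr0n // -natrM ler_nat; exact: total_bound.
rewrite -mulr_suml w1 mul1r.
case: (posnP N) => [->|Npos].
  by rewrite invr0 mul0r divr_ge0.
rewrite natrM [(2 ^ r)%:R * _]mulrC -!mulrA mulKf ?pnatr_eq0 -?lt0n //.
Qed.
End Count.


Lemma card_le_inj (X : finType) (P : pred X) (f : X -> nat) c :
  {in P &, injective f} -> (forall x, P x -> f x < c) -> #|[set x | P x]| <= c.
Proof.
move=> finj fc; rewrite cardE -(size_map f) -[c](size_iota 0).
apply: uniq_leq_size.
  rewrite map_inj_in_uniq ?enum_uniq // => x y; rewrite !mem_enum !inE; exact: finj.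
move=> y /mapP[x]; rewrite mem_enum inE => Px ->; rewrite mem_iota /=; exact: fc.
Qed.

Section Within.
Variables (T : finType) (adj : rel T).
Lemma within_S k u v : within adj k u v -> within adj k.+1 u v.
Proof. by rewrite /= => ->. Qed.
Lemma within_cons k u w v : adj u w -> within adj k w v -> within adj k.+1 u v.
Proof.
move=> auw; elim: k v => [|k IH] v.
  move=> /eqP <-; apply/orP; right; apply/existsP; exists u; by rewrite /= eqxx.
move=> /orP[/IH h|/existsP[w' /andP[/IH h aw'v]]].
  by apply/orP; left.
by apply/orP; right; apply/existsP; exists w'; apply/andP; split.
Qed.
Lemma within_sym k u v : (forall a b, adj a b = adj b a) ->
  within adj k u v -> within adj k v u.
Proof.
move=> hs; elim: k u v => [|k IH] u v; first by rewrite /= eq_sym.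
move=> /orP[/IH h|/existsP[w /andP[/IH h awv]]]; first by apply/orP; left.
by apply: within_cons h; rewrite hs.
Qed.
End Within.

Section Graph.
Variables (h D m : nat).
Hypotheses (hh : 2 <= h) (hD : 2 <= D) (hDe : ~~ odd D) (hm1 : 1 <= m) (hma : m <= D %/ 2).

Definition a := D %/ 2.
Lemma a2 : a * 2 = D.
Proof. by rewrite /a divnK // dvdn2. Qed.
Lemma a_pos : 0 < a. Proof. have := a2; lia. Qed.

Definition GT : finType := ('I_h.+1 * 'I_(D ^ h).+1)%type.
Definition nn j := if j == 0 then m else if j == 1 then a else a * a * (D - 1) ^ (j - 2).
Definition pp j := if j == 2 then a else D - 1.
Definition valid (u : GT) := nat_of_ord u.2 < nn (nat_of_ord u.1).
Definition tedge (u v : GT) := [&& nat_of_ord v.1 == (nat_of_ord u.1).+1, valid u, valid v &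
   (nat_of_ord u.1 == 0) || (nat_of_ord v.2 %/ pp (nat_of_ord v.1) == nat_of_ord u.2)].
Definition gadj : rel GT := fun u v => tedge u v || tedge v u.

Lemma pp_pos j : 0 < pp j.
Proof. have := a2; rewrite /pp; case: ifP; lia. Qed.
Lemma pp_le j : pp j <= D - 1.
Proof. have := a2; rewrite /pp; case: ifP; lia. Qed.

Lemma nnS j : 1 <= j -> nn j.+1 = nn j * pp j.+1.
Proof.
rewrite /nn /pp => hj; case: j hj => [//|[|j]] _ /=.
  by rewrite subnn expn0 muln1.
by rewrite (_ : j.+3 - 2 = (j.+2 - 2).+1) ?expnSr ?mulnA //; lia.
Qed.

Lemma nn_le j : j <= h -> nn j <= D ^ h.
Proof.
move=> jh.
have Dj : forall i, i <= h -> D ^ i <= D ^ h by move=> i ih; rewrite leq_pexp2l //; lia.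
have D1 : D <= D ^ h by rewrite -{1}(expn1 D); apply: Dj; lia.
have := a2; rewrite /nn; case: j jh => [|[|j]] jh /= ha.
- apply: leq_trans hma _; rewrite -/a; lia.
- lia.
- apply: leq_trans (Dj _ jh).
  rewrite !subSS subn0 !expnS mulnA leq_mul //; first by lia.
  by elim: (j) => [//|i IH]; rewrite !expnS leq_mul // leq_subr.
Qed.

Lemma GT_eq (u v : GT) : nat_of_ord u.1 = nat_of_ord v.1 -> nat_of_ord u.2 = nat_of_ord v.2 -> u = v.
Proof. by case: u v => [x y] [z w] /= /val_inj -> /val_inj ->. Qed.

Lemma gsimple : simple_graph gadj.
Proof.
split => [u v|v]; first by rewrite /gadj orbC.
rewrite /gadj orbb /tedge; apply/negP => /and4P[/eqP e _ _ _]; lia.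
Qed.

Lemma children_le (v : GT) :
  #|[set u | tedge v u]| <= (if nat_of_ord v.1 == 0 then a else pp (nat_of_ord v.1).+1).
Proof.
case: ifP => hv0.
- apply: card_le_inj (fun u : GT => nat_of_ord u.2) _ _ _.
  + move=> u w; rewrite ?unfold_in /= => /and4P[/eqP e1 _ _ _] /and4P[/eqP e2 _ _ _] e.
    by apply: GT_eq => //=; rewrite e1 e2.
  + move=> u /and4P[/eqP e1 _ vu _]; move: vu; rewrite /valid e1 (eqP hv0) /nn //.
- apply: card_le_inj (fun u : GT => nat_of_ord u.2 %% pp (nat_of_ord u.1)) _ _ _.
  + move=> u w; rewrite ?unfold_in /= => /and4P[/eqP e1 _ _ c1] /and4P[/eqP e2 _ _ c2].
    rewrite hv0 /= in c1 c2; rewrite e1 e2 => e.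
    apply: GT_eq; first by rewrite e1 e2.
    rewrite (divn_eq (nat_of_ord u.2) (pp (nat_of_ord u.1))) (divn_eq (nat_of_ord w.2) (pp (nat_of_ord w.1))).
    by rewrite (eqP c1) (eqP c2) e1 e2 e.
  + move=> u /and4P[/eqP e1 _ _ _]; rewrite -e1 ltn_pmod //; exact: pp_pos.
Qed.

Lemma parents_le (v : GT) :
  #|[set u | tedge u v]| <= (if nat_of_ord v.1 == 1 then m else 1).
Proof.
case: ifP => hv1.
- apply: card_le_inj (fun u : GT => nat_of_ord u.2) _ _ _.
  + move=> u w; rewrite ?unfold_in /= => /and4P[/eqP e1 _ _ _] /and4P[/eqP e2 _ _ _] e.
    by apply: GT_eq => //; move: e1 e2; rewrite (eqP hv1) => -[->] [->].
  + move=> u /and4P[/eqP e1 vu _ _]; have u0 : nat_of_ord u.1 = 0 by move: e1; rewrite (eqP hv1); case.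
    by move: vu; rewrite /valid /= u0.
- apply: card_le_inj (fun u : GT => 0) _ _ _ => //.
  move=> u w; rewrite ?unfold_in /= => /and4P[/eqP e1 _ _ c1] /and4P[/eqP e2 _ _ c2] _.
  have u0 : (nat_of_ord u.1 == 0) = false by apply/negbTE; apply/eqP => h0; move: hv1; rewrite e1 h0.
  have w0 : (nat_of_ord w.1 == 0) = false by apply/negbTE; apply/eqP => h0; move: hv1; rewrite e2 h0.
  rewrite u0 w0 /= in c1 c2.
  apply: GT_eq; first by move: e1 e2 => -> [].
  by rewrite -(eqP c1) -(eqP c2).
Qed.

Lemma gdeg : max_degree_le gadj D.
Proof.
move=> v.
have -> : [set u | gadj v u] = [set u | tedge v u] :|: [set u | tedge u v].
  by apply/setP => u; rewrite !inE.
apply: leq_trans (leq_card_setU _ _) _.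
apply: leq_trans (leq_add (children_le v) (parents_le v)) _.
have := a2; have := pp_le (nat_of_ord v.1).+1; have := a_pos.
case: ifP => [/eqP ->|_] /=; first by lia.
case: ifP => [/eqP ->|_] /=; rewrite /pp /=; lia.
Qed.

Lemma reach j : 1 <= j <= h -> forall u : GT, nat_of_ord u.1 = j -> valid u ->
  forall c : GT, nat_of_ord c.1 = 0 -> valid c -> within gadj j c u.
Proof.
elim: j => [//|j IH] /andP[_ jh] u hu vu c hc vc.
case: (posnP j) => [j0|jpos].
  rewrite j0 /=; apply/orP; right; apply/existsP; exists c; rewrite eqxx /=.
  by rewrite /gadj /tedge hu j0 hc eqxx vc vu.
pose w : GT := (inord j, inord (nat_of_ord u.2 %/ pp j.+1)).
have w1 : nat_of_ord w.1 = j by rewrite /= inordK //; lia.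
have w2 : nat_of_ord w.2 = nat_of_ord u.2 %/ pp j.+1.
  rewrite /= inordK // ltnS; apply: leq_trans (leq_div _ _) _.
  by rewrite -ltnS.
have vw : valid w.
  rewrite /valid /= -/(nat_of_ord w.1) -/(nat_of_ord w.2) w1 w2 ltn_divLR ?pp_pos // -nnS //.
  by move: vu; rewrite /valid /= hu.
apply/orP; right; apply/existsP; exists w; apply/andP; split.
  by apply: IH => //; rewrite jpos /=; lia.
apply/orP; left; rewrite /tedge hu w1 eqxx vw vu /=.
by apply/orP; right; apply/eqP; exact: (esym w2).
Qed.

Lemma layer_card j : j <= h -> nn j <= #|[set u : GT | (nat_of_ord u.1 == j) && valid u]|.
Proof.
move=> jh.
have kb : forall k : 'I_(nn j), k < (D ^ h).+1.
  by move=> k; rewrite ltnS; apply: leq_trans (nn_le jh); apply: ltnW.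
pose f (k : 'I_(nn j)) : GT := (inord j, inord k).
have finj : injective f.
  move=> k k' [] /(congr1 (@nat_of_ord _)); rewrite !inordK // => e; exact: val_inj.
apply: (@leq_trans #|f @: [set: 'I_(nn j)]|).
  by rewrite card_imset // cardsT card_ord.
apply: subset_leq_card; apply/subsetP => _ /imsetP[k _ ->].
rewrite inE /valid /= !inordK //.
by rewrite eqxx ltn_ord.
Qed.

End Graph.


Section Sim.
Variables (T : finType) (P : {set T * T}) (B : nat).
Local Notation J := (B.-tuple bool).
Definition SP := {p : T * T | p \in P}.
Definition upd1 (x : {ffun T -> {ffun T -> J}}) (v : {ffun SP -> J}) : {ffun T -> {ffun T -> J}} :=
  [ffun u => [ffun w => if (insub (u, w) : option SP) is Some q then v q else x u w]].
Definition get1 (x : {ffun T -> {ffun T -> J}}) : {ffun SP -> J} :=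
  [ffun q : SP => x (val q).1 (val q).2].
Definition ext1 (o : T -> {ffun T -> J}) : {ffun SP -> J} :=
  [ffun q : SP => o (val q).2 (val q).1].

Lemma get_upd1 x v : get1 (upd1 x v) = v.
Proof.
apply/ffunP => q; rewrite /get1 /upd1 !ffunE -surjective_pairing.
by rewrite (valK q).
Qed.
Lemma upd_upd1 x v : upd1 (upd1 x v) (get1 x) = x.
Proof.
apply/ffunP => u; apply/ffunP => w; rewrite /get1 /upd1 !ffunE.
case: insubP => [q _ e|_] //. rewrite (ffunE (fun q0 : SP => x (val q0).1 (val q0).2)). by rewrite e.
Qed.
Variable Y : {set T}.
Lemma upd_Y1 x v y : (forall p, p \in P -> p.1 \notin Y) -> y \in Y -> upd1 x v y = x y.
Proof.
move=> hP yY; apply/ffunP => w; rewrite /upd1 !ffunE.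
case: insubP => [q hq e|//]; exfalso.
by have := hP _ (valP q); rewrite e /= yY.
Qed.
Lemma ext_ok1 x o : sim_correct P x o -> ext1 o = get1 x.
Proof.
move/forallP => hc; apply/ffunP => q; rewrite /ext1 /get1 !ffunE.
by have := hc (val q); rewrite (valP q) /= => /eqP.
Qed.
Lemma ext_loc1 o o' : (forall p, p \in P -> p.2 \in Y) ->
  (forall y, y \in Y -> o y = o' y) -> ext1 o = ext1 o'.
Proof.
move=> hP ho; apply/ffunP => q; rewrite /ext1 !ffunE.
by rewrite ho // hP // (valP q).
Qed.
Lemma card_V1 : #|{ffun SP -> J}| = 2 ^ (B * #|P|).
Proof.
by rewrite card_ffun card_tuple card_bool /SP card_sig -expnM.
Qed.
End Sim.

Section LB.
Variables (T : finType) (Q : {set T}) (B : nat) (y0 : T).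
Local Notation J := (B.-tuple bool).
Definition SQ := {u : T | u \in Q}.
Definition upd2 (x : {ffun T -> J}) (v : {ffun SQ -> J}) : {ffun T -> J} :=
  [ffun u => if (insub u : option SQ) is Some q then v q else x u].
Definition get2 (x : {ffun T -> J}) : {ffun SQ -> J} := [ffun q : SQ => x (val q)].
Definition ext2 (o : T -> {ffun T -> J}) : {ffun SQ -> J} := [ffun q : SQ => o y0 (val q)].
Lemma get_upd2 x v : get2 (upd2 x v) = v.
Proof. by apply/ffunP => q; rewrite /get2 /upd2 !ffunE valK. Qed.
Lemma upd_upd2 x v : upd2 (upd2 x v) (get2 x) = x.
Proof.
apply/ffunP => u; rewrite /get2 /upd2 !ffunE.
case: insubP => [q _ e|_] //. rewrite (ffunE (fun q0 : SQ => x (val q0))). by rewrite e.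
Qed.
Lemma upd_Y2 x v y : y0 \notin Q -> y \in [set y0] -> upd2 x v y = x y.
Proof.
move=> hQ; rewrite inE => /eqP ->; rewrite /upd2 ffunE.
by case: insubP => [q hq e|//]; rewrite -e (valP q) in hQ.
Qed.
Lemma ext_ok2 h adj x o : (forall u, u \in Q -> (u != y0) && within adj h u y0) ->
  lb_correct adj h x o -> ext2 o = get2 x.
Proof.
move=> hQ /forallP hc; apply/ffunP => q; rewrite /ext2 /get2 !ffunE.
have := hc (val q) => /forallP/(_ y0); rewrite hQ ?(valP q) //=.
by move/eqP.
Qed.
Lemma ext_loc2 o o' : (forall y, y \in [set y0] -> o y = o' y) -> ext2 o = ext2 o'.
Proof. by move=> ho; apply/ffunP => q; rewrite /ext2 !ffunE ho // inE. Qed.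
Lemma card_V2 : #|{ffun SQ -> J}| = 2 ^ (B * #|Q|).
Proof.
by rewrite card_ffun card_tuple card_bool /SQ card_sig -expnM.
Qed.
End LB.

Section FinB.
Local Open Scope ring_scope.

Lemma final_bound (R : realFieldType) (q : R) (r K nV : nat) : 0 <= q ->
  q <= (2 ^ r)%:R / nV%:R -> (2 * r <= K)%N -> (2 ^ K <= nV)%N -> q ^+ 2 * 2 ^+ K <= 1.
Proof.
move=> q0 hq hr hK.
have nV0 : (0 < nV)%N by apply: leq_trans hK; rewrite expn_gt0.
have nVR : 0 < nV%:R :> R by rewrite ltr0n.
have h1 : q ^+ 2 <= ((2 ^ r)%:R / nV%:R) ^+ 2 by rewrite lerXn2r // ?nnegrE // (le_trans q0 hq).
apply: (le_trans (ler_wpM2r _ h1)); first by rewrite exprn_ge0.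
rewrite expr_div_n -mulrAC ler_pdivrMr ?exprn_gt0 // mul1r.
rewrite -!natrX -natrM ler_nat.
rewrite -expnM -expnD.
apply: (@leq_trans (2 ^ (K * 2))).
  by rewrite leq_exp2l //; lia.
by rewrite expnM leq_exp2r.
Qed.

End FinB.

Unset Implicit Arguments.
Local Open Scope ring_scope.

Theorem theorem7 :
  forall h : nat, (2 <= h)%N ->
  exists d1 d2 : nat, (0 < d1)%N /\ (0 < d2)%N /\
  forall (B D : nat), (1 <= B)%N -> (2 <= D)%N -> ~~ odd D ->
  (* part (1): B-bit h-hop simulation *)
  (exists (T : finType) (adj : rel T) (P : {set T * T}),
     simple_graph adj /\ max_degree_le adj D /\
     (D ^ h <= d1 * #|T| /\ #|T| <= d2 * D ^ h)%N /\
     sim_instance adj h P /\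
     let K := (B * (D - 1) ^ (h - 2) * (D %/ 2) ^ 3)%N in
     forall (R : realFieldType) (S : finType)
            (A : algo T {ffun T -> B.-tuple bool} S {ffun T -> B.-tuple bool})
            (mu : T -> S -> R) (rounds : nat),
       is_seed_distr mu -> (2 * rounds <= K)%N ->
       (succ_prob adj A mu rounds (sim_correct P)) ^+ 2 * 2 ^+ K <= 1)
  /\
  (* part (2): B-bit h-hop Local Broadcast *)
  (exists (T : finType) (adj : rel T),
     simple_graph adj /\ max_degree_le adj D /\
     (D ^ h <= d1 * #|T| /\ #|T| <= d2 * D ^ h)%N /\
     let K := (B * (D - 1) ^ (h - 2) * (D %/ 2) ^ 2)%N in
     forall (R : realFieldType) (S : finType)
            (A : algo T (B.-tuple bool) S {ffun T -> B.-tuple bool})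
            (mu : T -> S -> R) (rounds : nat),
       is_seed_distr mu -> (2 * rounds <= K)%N ->
       (succ_prob adj A mu rounds (lb_correct adj h)) ^+ 2 * 2 ^+ K <= 1).
Proof.
move=> h hh; exists 1%N, (2 * h.+1)%N; split => //; split => //.
move=> B D hB hD hDe.
have ha := a2 hDe.
have hX : (0 < D ^ h)%N by rewrite expn_gt0; lia.
have sz : (D ^ h <= 1 * #|GT h D| /\ #|GT h D| <= 2 * h.+1 * D ^ h)%N.
  rewrite card_prod !card_ord; split; nia.
have nnh : forall m, nn D m h = (a D * a D * (D - 1) ^ (h - 2))%N.
  by move=> m; rewrite /nn; case: h hh {sz hX} => [|[|h']].
split.
- have hm1 : (1 <= D %/ 2)%N by rewrite /a in ha; lia.
  have hma : (D %/ 2 <= D %/ 2)%N by [].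
  pose m := (D %/ 2)%N.
  pose Top := [set u : GT h D | (nat_of_ord u.1 == 0)%N && valid m u].
  pose Lh := [set u : GT h D | (nat_of_ord u.1 == h) && valid m u].
  exists (GT h D), (@gadj h D m), (setX Top Lh).
  split; first exact: (gsimple hh hD hDe hm1 hma).
  split; first exact: (gdeg hh hD hDe hm1 hma).
  split; first exact: sz.
  split.
    move=> p; rewrite inE => /andP[]; rewrite !inE => /andP[/eqP p10 vp1] /andP[/eqP p2h vp2].
    apply/andP; split.
      by apply/eqP => e; rewrite e p2h in p10; lia.
    by apply: (reach hh hD hDe hm1 hma) => //; lia.
  move=> K R S A mu r hmu hr.
  pose Y := [set u : GT h D | (nat_of_ord u.1 != 0)%N].
  have hY : forall y y' u u', y \in Y -> y' \in Y -> u \notin Y -> u' \notin Y ->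
      @gadj h D m y u -> @gadj h D m y' u' -> @gadj h D m y' u.
    move=> y y' u u'; rewrite !inE => y0 y'0 /negPn/eqP u0 /negPn/eqP u'0.
    move=> /orP[/and4P[/eqP e _ _ _]|/and4P[/eqP e1 vu vy _]]; first by lia.
    move=> /orP[/and4P[/eqP e _ _ _]|/and4P[/eqP e2 vu' vy' _]]; first by lia.
    by apply/orP; right; rewrite /tedge e2 u'0 u0 eqxx vu vy'.
  have hP1 : forall p, p \in setX Top Lh -> p.1 \notin Y.
    by move=> p; rewrite !inE => /andP[/andP[-> _] _].
  have hP2 : forall p, p \in setX Top Lh -> p.2 \in Y.
    by move=> p; rewrite !inE => /andP[_ /andP[/eqP -> _]]; lia.
  have := prob_bound A hY (@get_upd1 _ _ B) (@upd_upd1 _ _ B)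
     (fun x v y => @upd_Y1 _ _ _ Y x v y hP1) (@ext_ok1 _ _ B)
     (fun o o' => @ext_loc1 _ _ _ Y o o' hP2) r hmu.
  rewrite card_V1 expn_gt0 /= => /(_ isT) /andP[q0 qb].
  apply: (final_bound q0 qb hr).
  rewrite leq_exp2l // cardsX.
  have t1 := layer_card hh hD hDe hm1 hma (leq0n h).
  have t2 := layer_card hh hD hDe hm1 hma (leqnn h).
  rewrite nnh in t2; rewrite /nn /= in t1.
  rewrite /K -mulnA leq_mul2l; apply/orP; right.
  apply: leq_trans (leq_mul t1 t2).
  rewrite /a -/m; set X := ((D - 1) ^ (h - 2))%N.
  by rewrite !expnS expn0 muln1; nia.
- have hm1 : (1 <= 1)%N by [].
  have hma : (1 <= D %/ 2)%N by rewrite /a in ha; lia.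
  exists (GT h D), (@gadj h D 1).
  have gs := gsimple hh hD hDe hm1 hma.
  split; first exact: gs.
  split; first exact: (gdeg hh hD hDe hm1 hma).
  split; first exact: sz.
  move=> K R S A mu r hmu hr.
  pose y0 : GT h D := (ord0, ord0).
  have vy0 : valid 1 y0 by [].
  pose Lh := [set u : GT h D | (nat_of_ord u.1 == h) && valid 1 u].
  have hY : forall y y' u u', y \in [set y0] -> y' \in [set y0] -> u \notin [set y0] -> u' \notin [set y0] ->
      @gadj h D 1 y u -> @gadj h D 1 y' u' -> @gadj h D 1 y' u.
    by move=> y y' u u' /set1P -> /set1P -> _ _ a1 _.
  have y0Q : y0 \notin Lh by rewrite inE /=; apply/negP => /andP[/eqP e _]; lia.
  have hQ : forall u, u \in Lh -> (u != y0) && within (@gadj h D 1) h u y0.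
    move=> u; rewrite inE => /andP[/eqP uh vu]; apply/andP; split.
      by apply/eqP => e; move: uh; rewrite e /=; lia.
    apply: (within_sym gs.1).
    by apply: (reach hh hD hDe hm1 hma) => //; lia.
  have := prob_bound A hY (@get_upd2 _ Lh B) (@upd_upd2 _ Lh B)
     (fun x v y => @upd_Y2 _ _ _ y0 x v y y0Q) (fun x o => @ext_ok2 _ _ B y0 h _ x o hQ)
     (fun o o' => @ext_loc2 _ Lh B y0 o o') r hmu.
  rewrite card_V2 expn_gt0 /= => /(_ isT) /andP[q0 qb].
  apply: (final_bound q0 qb hr).
  rewrite leq_exp2l //.
  have t2 := layer_card hh hD hDe hm1 hma (leqnn h).
  rewrite nnh in t2.
  rewrite /K -mulnA leq_mul2l; apply/orP; right.
  apply: leq_trans t2.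
  rewrite /a; set X := ((D - 1) ^ (h - 2))%N.
  by rewrite !expnS expn0 muln1; nia.
Qed.
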